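(* There exists a system $S$ of communicating finite state machines (with peer-to-peer FIFO communication) that is $1$-synchronizable but not synchronizable.
   Context: A message set $M=(\Sigma_M,n,\mathrm{src},\mathrm{dst})$ consists of a finite set $\Sigma_M$ of messages, a number $n\ge 1$ of peers, and maps $\mathrm{src},\mathrm{dst}:\Sigma_M\to\{1,\dots,n\}$ with $\mathrm{src}(a)\neq\mathrm{dst}(a)$. Actions are $!a$ (send, performed by peer $\mathrm{src}(a)$) and $?a$ (receive, performed by peer $\mathrm{dst}(a)$), $a\in\Sigma_M$. An $M$-trace is a finite sequence of actions; $!?a$ abbreviates $!a\cdot ?a$. For a trace $\tau$: $\pi_!(\tau)$ is the sequence of messages sent in $\tau$; $\pi_?(\tau)$ the sequence of messages received; for channel $i\to j$, $\mathrm{buf}_{i\to j}(\tau)$ is the word $w$ (if it exists) such that (sent messages on channel $i\to j$ in $\tau$) $=$ (received messages on channel $i\to j$ in $\tau$)$\cdot w$. $\tau$ is FIFO (resp. $k$-bounded FIFO) if for all $i,j$ and all prefixes $\tau'$ of $\tau$, $\mathrm{buf}_{i\to j}(\tau')$ is defined (resp. defined and of length $\le k$). $\tau$ is synchronous if $\tau=!?a_1\cdots !?a_k$ for some $k\ge0$. A system $S=(P_1,\dots,P_n)$ consists of finite automata $P_i$ (all states accepting) over the actions of peer $i$. A configuration is a tuple of control states, one per peer, together with a word $w_{i,j}\in\Sigma_M^*$ (content of FIFO channel $i\to j$) for each $i\neq j$; it is stable if all channels are empty. A send $!a$ with $\mathrm{src}(a)=i,\mathrm{dst}(a)=j$ moves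 $P_i$ along a $!a$-transition and appends $a$ to $w_{i,j}$; a receive $?a$ moves $P_j$ along a $?a$-transition and removes $a$ from the head of $w_{i,j}$. The initial configuration $c_0$ has initial states and empty channels. A trace of $S$ is a $\tau$ with $c_0\xrightarrow{\tau}c$ for some $c$. $T_k(S)$ ($k\ge1$) is the set of $k$-bounded FIFO traces of $S$, $T_0(S)$ the set of synchronous traces of $S$, $T_\omega(S)=\bigcup_{k\ge0}T_k(S)$. $ST_k(S)=\{\pi_!(\tau)\mid \tau\in T_k(S)\}\cup\{(\pi_!(\tau),c)\mid c_0\xrightarrow{\tau}c,\ c\text{ stable},\ \tau\in T_k(S)\}$. $S$ is synchronizable if $ST_0(S)=ST_\omega(S)$, and $k$-synchronizable ($k\ge1$) if $ST_0(S)=ST_k(S)$. *)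

(* Defs.v *)
From mathcomp Require Import all_boot.
Set Implicit Arguments. Unset Strict Implicit. Unset Printing Implicit Defensive.

Record msgset := MsgSet {
  msg : finType;
  npeers : nat;
  npeers_pos : 0 < npeers;
  src : msg -> 'I_npeers;
  dst : msg -> 'I_npeers;
  src_neq_dst : forall a, src a != dst a }.

Section CFSM.
Variable M : msgset.
Local Notation peer := 'I_(npeers M).
Local Notation Msg := (msg M).

Inductive action := Send of Msg | Recv of Msg.

Definition actor (x : action) : peer :=
  match x with Send a => src a | Recv a => dst a end.

(* A system: one finite automaton per peer (all states accepting).  All
   automata use a common finite type of control states (w.l.o.g.); the
   transitions of P_i are labelled only by actions of peer i. *)
Record system := System {
  state : finType;
  init : peer -> state;
  delta : peer -> state -> action -> state -> bool;
  delta_wf : forall i q x q', delta i q x q' -> actor x = i }.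

Variable S : system.

(* Configurations: control states and FIFO channel contents w_{i,j}
   (the entries (i,i) are never used and stay empty). *)
Record config := Config {
  cst : {ffun peer -> state S};
  cch : {ffun peer * peer -> seq Msg} }.

Definition c0 : config := Config [ffun i => @init S i] [ffun _ => [::]].

Definition stable (c : config) : Prop :=
  forall i j : peer, i != j -> cch c (i, j) = [::].

Definition step (c : config) (x : action) (c' : config) : Prop :=
  match x with
  | Send a =>
      exists q', @delta S (src a) (cst c (src a)) (Send a) q' /\
        c' = Config [ffun k => if k == src a then q' else cst c k]
                    [ffun p => if p == (src a, dst a) then rcons (cch c p) a
                               else cch c p]
  | Recv a =>
      exists q' w, @delta S (dst a) (cst c (dst a)) (Recv a) q' /\
        cch c (src a, dst a) = a :: w /\
        c' = Config [ffun k => if k == dst a then q' else cst c k]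
                    [ffun p => if p == (src a, dst a) then w else cch c p]
  end.

Inductive runs : config -> seq action -> config -> Prop :=
  | runs_nil c : runs c [::] c
  | runs_cons c x c' tau c'' :
      step c x c' -> runs c' tau c'' -> runs c (x :: tau) c''.

Definition is_trace (tau : seq action) : Prop := exists c, runs c0 tau c.

Definition sends (tau : seq action) : seq Msg :=
  pmap (fun x => if x is Send a then Some a else None) tau.
Definition recvs (tau : seq action) : seq Msg :=
  pmap (fun x => if x is Recv a then Some a else None) tau.

Definition buf (i j : peer) (tau : seq action) : option (seq Msg) :=
  let onch := fun a : Msg => (src a == i) && (dst a == j) in
  let s := filter onch (sends tau) in
  let r := filter onch (recvs tau) in
  if take (size r) s == r then Some (drop (size r) s) else None.

Definition fifo (tau : seq action) : Prop :=
  forall (n : nat) (i j : peer), exists w, buf i j (take n tau) = Some w.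

Definition kbounded_fifo (k : nat) (tau : seq action) : Prop :=
  forall (n : nat) (i j : peer),
    exists w, buf i j (take n tau) = Some w /\ size w <= k.

Definition synchronous (tau : seq action) : Prop :=
  exists s : seq Msg, tau = flatten (map (fun a => [:: Send a; Recv a]) s).

Definition inT (k : nat) (tau : seq action) : Prop :=
  is_trace tau /\ (if k is 0 then synchronous tau else kbounded_fifo k tau).

Definition ST (k : nat) (x : seq Msg + (seq Msg * config)) : Prop :=
  match x with
  | inl s => exists tau, inT k tau /\ s = sends tau
  | inr (s, c) => exists tau, inT k tau /\ runs c0 tau c /\ stable c /\
                              s = sends tau
  end.

(* ST_omega = union of all ST_k (since T_omega is the union of all T_k). *)
Definition STomega (x : seq Msg + (seq Msg * config)) : Prop :=
  exists k, ST k x.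

Definition synchronizable : Prop := forall x, ST 0 x <-> STomega x.

Definition k_synchronizable (k : nat) : Prop := forall x, ST 0 x <-> ST k x.

End CFSM.

(* Main.v *)
Require Import Defs.
From mathcomp Require Import all_boot.
Set Implicit Arguments. Unset Strict Implicit. Unset Printing Implicit Defensive.

Section Generic.
Variable M : msgset.
Variable S : system M.

Lemma runs_nil_inv (c c' : config S) : runs c [::] c' -> c' = c.
Proof. by move=> H; inversion H. Qed.

Lemma runs_cons_inv (c c'' : config S) x t :
  runs c (x :: t) c'' -> exists c', step c x c' /\ runs c' t c''.
Proof. move=> H; inversion H; subst; eauto. Qed.

Lemma runs_take (c c' : config S) tau n :
  runs c tau c' -> exists cm, runs c (take n tau) cm.
Proof.
move=> H; elim: H n => [c1|c1 x c2 t c3 Hs Hr IH] n.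
  by exists c1; constructor.
case: n => [|n] /=; first by exists c1; constructor.
have [cm Hcm] := IH n; exists cm; exact: runs_cons Hs Hcm.
Qed.

Definition onch (i j : 'I_(npeers M)) (a : msg M) := (src a == i) && (dst a == j).

Definition inv (p : seq (action M)) (c : config S) :=
  forall i j, filter (onch i j) (sends p) = filter (onch i j) (recvs p) ++ cch c (i, j).

Lemma sends_cat (p q : seq (action M)) : sends (p ++ q) = sends p ++ sends q.
Proof. by rewrite /sends pmap_cat. Qed.
Lemma recvs_cat (p q : seq (action M)) : recvs (p ++ q) = recvs p ++ recvs q.
Proof. by rewrite /recvs pmap_cat. Qed.

Lemma inv_step p (c c' : config S) x : inv p c -> step c x c' -> inv (p ++ [:: x]) c'.
Proof.
move=> Hi; case: x => a /=.
  move=> [q' [_ ->]] i j /=; rewrite sends_cat recvs_cat /= !filter_cat /= ffunE.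
  rewrite Hi /onch cats0 -catA; congr (_ ++ _).
  rewrite xpair_eqE [i == _]eq_sym [j == _]eq_sym.
  by case: ifP => _ //=; rewrite ?cats1 ?cats0.
move=> [q' [w [_ [Hw ->]]]] i j /=; rewrite sends_cat recvs_cat /= !filter_cat /= ffunE.
rewrite Hi /onch cats0 -catA; congr (_ ++ _).
rewrite xpair_eqE [i == _]eq_sym [j == _]eq_sym.
case: ifP => E //; move: E => /andP [/eqP Ei /eqP Ej]; subst i j.
by rewrite Hw.
Qed.

Lemma inv_runs (c c' : config S) tau : runs c tau c' ->
  forall p, inv p c -> inv (p ++ tau) c'.
Proof.
elim=> [c1|c1 x c2 t c3 Hs Hr IH] p Hp; first by rewrite cats0.
rewrite -cat1s catA; apply: IH; exact: inv_step Hp Hs.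
Qed.

Lemma inv0 : inv [::] (c0 S).
Proof. by move=> i j /=; rewrite ffunE. Qed.

Lemma buf_run tau (c : config S) : runs (c0 S) tau c ->
  forall i j, buf i j tau = Some (cch c (i, j)).
Proof.
move=> H i j; have := inv_runs H inv0 i j; rewrite /= => E.
rewrite /buf -/(onch i j) E take_size_cat // drop_size_cat // eqxx //.
Qed.

Definition bnd k (c : config S) := forall p, size (cch c p) <= k.

Lemma kb_to tau k n (cn : config S) : kbounded_fifo k tau ->
  runs (c0 S) (take n tau) cn -> bnd k cn.
Proof.
move=> Hk Hr [i j]; have [w [Hw Hs]] := Hk n i j.
by rewrite (buf_run Hr) in Hw; case: Hw => ->.
Qed.

Lemma kb_from tau k (c : config S) : runs (c0 S) tau c ->
  (forall n cn, runs (c0 S) (take n tau) cn -> bnd k cn) -> kbounded_fifo k tau.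
Proof.
move=> H Hb n i j; have [cm Hcm] := runs_take n H.
exists (cch cm (i, j)); split; [exact: buf_run | exact: (Hb _ _ Hcm (i, j))].
Qed.

Definition synct (s : seq (msg M)) : seq (action M) :=
  flatten (map (fun a => [:: Send a; Recv a]) s).

Lemma sends_synct s : sends (synct s) = s.
Proof. by elim: s => //= a s IH; rewrite /sends /= -/(sends _) IH. Qed.

Lemma sync_bnd s : forall (c : config S) n cn, (forall p, cch c p = [::]) ->
  runs c (take n (synct s)) cn -> bnd 1 cn.
Proof.
elim: s => [|a s IH] c n cn Hc.
  by rewrite /= => /runs_nil_inv -> p; rewrite Hc.
case: n => [|[|n]] /=.
- by move=> /runs_nil_inv -> p; rewrite Hc.
- move=> /runs_cons_inv [c1 [[q' [_ ->]] /runs_nil_inv ->]] p /=.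
  by rewrite ffunE; case: ifP; rewrite Hc.
move=> /runs_cons_inv [c1 [[q' [_ ->]] /runs_cons_inv [c2 [[q2 [w [_ [/= Hw ->]]]] Hr]]]].
apply: IH Hr => p /=; move: Hw; rewrite !ffunE eqxx Hc /= => -[<-].
by case: ifP => // E; rewrite E Hc.
Qed.

Lemma sync_kb tau (c : config S) : runs (c0 S) tau c -> synchronous tau -> kbounded_fifo 1 tau.
Proof.
move=> H [s Hs]; apply: (kb_from H) => n cn; rewrite Hs => Hr.
apply: (sync_bnd _ Hr) => p; by rewrite ffunE.
Qed.

Lemma ST0_sub_ST1 x : ST (S:=S) 0 x -> ST (S:=S) 1 x.
Proof.
case: x => [s|[s c]] /=.
  move=> [tau [[[c Hc] Hsy] ->]]; exists tau; split=> //; split; [by exists c|exact: sync_kb Hc Hsy].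
move=> [tau [[Ht Hsy] [Hr [Hst ->]]]]; exists tau; split=> //; split=> //.
exact: sync_kb Hr Hsy.
Qed.

End Generic.

Definition P0 : 'I_3 := @Ordinal 3 0 isT.
Definition P1 : 'I_3 := @Ordinal 3 1 isT.
Definition P2 : 'I_3 := @Ordinal 3 2 isT.

Lemma ord3 (i : 'I_3) : i = P0 \/ i = P1 \/ i = P2.
Proof.
case: i => [[|[|[|m]]] H].
- by left; apply: val_inj.
- by right; left; apply: val_inj.
- by right; right; apply: val_inj.
- by [].
Qed.

Definition msrc (m : 'I_3) : 'I_3 := match val m with 0 => P0 | 1 => P0 | _ => P2 end.
Definition mdst (m : 'I_3) : 'I_3 := match val m with 0 => P1 | 1 => P2 | _ => P1 end.
Lemma msrc_neq m : msrc m != mdst m.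
Proof. by case: (ord3 m) => [->|[->|->]]. Qed.

Definition M : msgset := @MsgSet 'I_3 3 isT msrc mdst msrc_neq.

Definition Q0 : 'I_7 := @Ordinal 7 0 isT.
Definition Q1 : 'I_7 := @Ordinal 7 1 isT.
Definition Q2 : 'I_7 := @Ordinal 7 2 isT.
Definition Q3 : 'I_7 := @Ordinal 7 3 isT.
Definition Q4 : 'I_7 := @Ordinal 7 4 isT.
Definition Q5 : 'I_7 := @Ordinal 7 5 isT.
Definition Q6 : 'I_7 := @Ordinal 7 6 isT.

Definition code (x : action M) : nat :=
  match x with Send a => val a | Recv a => 3 + val a end.

Definition trn (i q k : nat) : option 'I_7 :=
  match i, q, k with
  | 0, 0, 0 => Some Q1 | 0, 1, 0 => Some Q2 | 0, 2, 1 => Some Q3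
  | 1, 0, 3 => Some Q1 | 1, 1, 3 => Some Q2 | 1, 2, 5 => Some Q3
  | 1, 0, 5 => Some Q4 | 1, 4, 3 => Some Q5 | 1, 5, 3 => Some Q6
  | 2, 0, 4 => Some Q1 | 2, 1, 2 => Some Q2
  | _, _, _ => None
  end.
Arguments trn : simpl never.

Definition dlt (i : 'I_(npeers M)) (q : 'I_7) (x : action M) (q' : 'I_7) : bool :=
  (trn (val i) (val q) (code x) == Some q') && (actor x == i).

Lemma dlt_wf i q x q' : dlt i q x q' -> actor x = i.
Proof. by move=> /andP [_ /eqP]. Qed.

Definition S : system M := @System M 'I_7 (fun _ => Q0) dlt dlt_wf.

Definition nextc (c : config S) (x : action M) : option (config S) :=
  match x with
  | Send a =>
    match trn (val (src a)) (val (cst c (src a))) (code x) with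
    | Some q' => Some (Config [ffun k => if k == src a then (q' : state S) else cst c k]
                    [ffun p => if p == (src a, dst a) then rcons (cch c p) a
                               else cch c p])
    | None => None end
  | Recv a =>
    match cch c (src a, dst a) with
    | a' :: w => if a' == a then
        match trn (val (dst a)) (val (cst c (dst a))) (code x) with
        | Some q' => Some (Config [ffun k => if k == dst a then (q' : state S) else cst c k]
                    [ffun p => if p == (src a, dst a) then w else cch c p])
        | None => None end
      else None
    | [::] => None end
  end.

Lemma step_next (c c' : config S) x : step c x c' <-> nextc c x = Some c'.
Proof.
case: x => a /=; split.
- by move=> [q' [/andP [/eqP E _] ->]]; rewrite E.
- case E: trn => [q'|] // [<-]; exists q'; split=> //.
  by apply/andP; split; [rewrite /= E|].
- by move=> [q' [w [/andP [/eqP E _] [-> ->]]]]; rewrite eqxx E.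
- case Hw: (cch c _) => [|a' w] //; case: eqP => // <-.
  case E: trn => [q'|] // [<-]; exists q', w; split=> //.
  by apply/andP; split; [rewrite /= E|].
Qed.

Definition pl : seq ('I_3 * 'I_3) :=
  [:: (P0,P0); (P0,P1); (P0,P2); (P1,P0); (P1,P1); (P1,P2); (P2,P0); (P2,P1); (P2,P2)].

Definition AC := (seq nat * seq (seq nat))%type.

Definition abs (c : config S) : AC :=
  ([:: val (cst c P0); val (cst c P1); val (cst c P2)],
   [seq map val (cch c p) | p <- pl]).

Definition astep (A : AC) (k : nat) : option AC :=
  let m := if k < 3 then k else k - 3 in
  let s := if m == 2 then 2 else 0 in
  let d := if m == 1 then 2 else 1 in
  let ix := 3 * s + d in
  if k < 3 then
    match trn s (nth 0 A.1 s) k with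
    | Some q' => Some (set_nth 0 A.1 s (val q'), set_nth [::] A.2 ix (rcons (nth [::] A.2 ix) m))
    | None => None end
  else match nth [::] A.2 ix with
    | m' :: w => if m' == m then
        match trn d (nth 0 A.1 d) k with
        | Some q' => Some (set_nth 0 A.1 d (val q'), set_nth [::] A.2 ix w)
        | None => None end
      else None
    | [::] => None end.

Lemma abs_next c x : omap abs (nextc c x) = astep (abs c) (code x).
Proof.
case: x => a; case: (ord3 a) => [->|[->|->]]; rewrite /nextc /astep /= /msrc /mdst /=.
- by case: (trn _ _ _) => [q'|] //=; rewrite /abs /= !ffunE /= map_rcons.
- by case: (trn _ _ _) => [q'|] //=; rewrite /abs /= !ffunE /= map_rcons.
- by case: (trn _ _ _) => [q'|] //=; rewrite /abs /= !ffunE /= map_rcons.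
- case: (cch c _) => [|a' w] //=.
  have -> : (a' == P0) = (val a' == 0) by [].
  case: ifP => //= _; case: (trn _ _ _) => [q'|] //=; rewrite /abs /= !ffunE /=.
  done.
- case: (cch c _) => [|a' w] //=.
  have -> : (a' == P1) = (val a' == 1) by [].
  case: ifP => //= _; case: (trn _ _ _) => [q'|] //=; rewrite /abs /= !ffunE /=.
  done.
- case: (cch c _) => [|a' w] //=.
  have -> : (a' == P2) = (val a' == 2) by [].
  case: ifP => //= _; case: (trn _ _ _) => [q'|] //=; rewrite /abs /= !ffunE /=.
  done.
Qed.

Fixpoint arun (A : AC) (ks : seq nat) : option AC :=
  match ks with
  | [::] => Some A
  | k :: ks => match astep A k with Some A' => arun A' ks | None => None end
  end.

Lemma runs_arun (c c' : config S) tau : runs c tau c' -> arun (abs c) (map code tau) = Some (abs c').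
Proof.
elim=> [c1|c1 x c2 t c3 Hs Hr IH] //=.
by rewrite -abs_next; move/step_next: Hs => ->.
Qed.

Lemma arun_runs tau : forall (c : config S) A, arun (abs c) (map code tau) = Some A ->
  exists c', runs c tau c' /\ abs c' = A.
Proof.
elim: tau => [|x t IH] c A /=.
  by move=> [<-]; exists c; split=> //; constructor.
rewrite -abs_next; case E: (nextc c x) => [c1|] //= H.
have [c' [Hr Ha]] := IH _ _ H; exists c'; split=> //.
by apply: runs_cons Hr; apply/step_next.
Qed.

Lemma abs_inj (c1 c2 : config S) : abs c1 = abs c2 -> c1 = c2.
Proof.
case: c1 => s1 h1; case: c2 => s2 h2; rewrite /abs /= => -[e0 e1 e2 E00 E01 E02 E10 E11 E12 E20 E21 E22].
have Hm : injective (map (@nat_of_ord 3)) := inj_map val_inj.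
congr Config; apply/ffunP.
- move=> i; case: (ord3 i) => [->|[->|->]]; exact: val_inj.
- move=> [i j]; case: (ord3 i) => [->|[->|->]]; case: (ord3 j) => [->|[->|->]];
  exact: Hm.
Qed.

Definition boundedA k (A : AC) := all (fun l => size l <= k) A.2.

Lemma mem_pl p : p \in pl.
Proof. case: p => i j; by case: (ord3 i) => [->|[->|->]]; case: (ord3 j) => [->|[->|->]]. Qed.

Lemma bnd_abs k (c : config S) : bnd k c <-> boundedA k (abs c).
Proof.
rewrite /boundedA /abs all_map; split.
  by move=> H; apply/allP => p _ /=; rewrite size_map.
by move/allP => H p; have := H p (mem_pl p); rewrite /= size_map.
Qed.

Definition astable (A : AC) := all (fun n => nth [::] A.2 n == [::]) [:: 1; 2; 3; 5; 6; 7].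

Lemma stable_abs (c : config S) : stable c <-> astable (abs c).
Proof.
split.
  by move=> H; rewrite /astable /= !H.
have Mv : forall l : seq 'I_3, ([seq val x | x <- l] == [::]) = (l == [::]) by case.
rewrite /astable /= !Mv.
move=> /andP [E1 /andP [E2 /andP [E3 /andP [E5 /andP [E6 /andP [E7 _]]]]]] i j.
by case: (ord3 i) => [->|[->|->]]; case: (ord3 j) => [->|[->|->]] // _; apply/eqP.
Qed.

Definition mk st c01 c02 c21 : AC :=
  (st, [:: [::]; c01; c02; [::]; [::]; [::]; [::]; c21; [::]]).

Definition goodlist : seq (AC * seq nat) :=
  [:: (mk [:: 0; 0; 0] [::] [::] [::], [::]);
      (mk [:: 1; 0; 0] [:: 0] [::] [::], [:: 0]);
      (mk [:: 1; 1; 0] [::] [::] [::], [:: 0]);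
      (mk [:: 2; 1; 0] [:: 0] [::] [::], [:: 0; 0]);
      (mk [:: 2; 2; 0] [::] [::] [::], [:: 0; 0]);
      (mk [:: 3; 1; 0] [:: 0] [:: 1] [::], [:: 0; 0; 1]);
      (mk [:: 3; 2; 0] [::] [:: 1] [::], [:: 0; 0; 1]);
      (mk [:: 3; 1; 1] [:: 0] [::] [::], [:: 0; 0; 1]);
      (mk [:: 3; 2; 1] [::] [::] [::], [:: 0; 0; 1]);
      (mk [:: 3; 1; 2] [:: 0] [::] [:: 2], [:: 0; 0; 1; 2]);
      (mk [:: 3; 2; 2] [::] [::] [:: 2], [:: 0; 0; 1; 2]);
      (mk [:: 3; 3; 2] [::] [::] [::], [:: 0; 0; 1; 2])].

Definition goodA (A : AC) (s : seq nat) := has (fun e => (e.1 == A) && (e.2 == s)) goodlist.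

Definition closure_b :=
  all (fun e => all (fun k => match astep e.1 k with
      | Some A' => boundedA 1 A' ==> goodA A' (e.2 ++ (if k < 3 then [:: k] else [::]))
      | None => true end) (iota 0 6)) goodlist.

Lemma closure_ok : closure_b.
Proof. by vm_compute. Qed.

Definition A0 : AC := mk [:: 0; 0; 0] [::] [::] [::].

Definition synctA (s : seq nat) := flatten [seq [:: m; 3 + m] | m <- s].

Definition sync_b :=
  all (fun e => match arun A0 (synctA e.2) with
      | Some A' => astable e.1 ==> (A' == e.1)
      | None => false end) goodlist.

Lemma sync_ok : sync_b.
Proof. by vm_compute. Qed.

Lemma abs_c0 : abs (c0 S) = A0.
Proof. by rewrite /abs /= !ffunE. Qed.

Lemma code_synct (s : seq (msg M)) : map code (synct s) = synctA (map (@nat_of_ord 3) s).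
Proof. by elim: s => //= a s ->. Qed.

Lemma sends_code (x : action M) :
  map (@nat_of_ord 3) (sends [:: x]) = if code x < 3 then [:: code x] else [::].
Proof. by case: x => a /=; rewrite ?ltn_ord // ltnNge leq_addr. Qed.

Lemma code_lt (x : action M) : code x < 6.
Proof.
case: x => a; have H : val (a : 'I_3) < 3 := ltn_ord (a : 'I_3); rewrite /=.
  exact: leq_trans H _.
by rewrite -[6]/(3 + 3) ltn_add2l.
Qed.

Lemma closure_lemma A s k A' : goodA A s -> astep A k = Some A' -> k < 6 ->
  boundedA 1 A' -> goodA A' (s ++ (if k < 3 then [:: k] else [::])).
Proof.
move=> /hasP [e He /andP [/eqP E1 /eqP E2]] Hst Hk HB.
have := allP closure_ok e He; move/allP/(_ k); rewrite mem_iota /= Hk.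
by rewrite E1 E2 Hst HB => /(_ isT).
Qed.

Lemma good_runs (c c' : config S) tau : runs c tau c' ->
  forall p : seq (action M), goodA (abs c) (map (@nat_of_ord 3) (sends p)) ->
  (forall n cn, runs c (take n tau) cn -> bnd 1 cn) ->
  goodA (abs c') (map (@nat_of_ord 3) (sends (p ++ tau))).
Proof.
elim=> [c1|c1 x c2 t c3 Hs Hr IH] p Hg Hb; first by rewrite cats0.
have Hb1 : bnd 1 c2 by apply: (Hb 1); rewrite /= take0; apply: (runs_cons Hs); constructor.
rewrite -cat1s catA; apply: IH.
  rewrite sends_cat map_cat sends_code; apply: closure_lemma Hg _ (code_lt x) _.
    by rewrite -abs_next; move/step_next: Hs => ->.
  by apply/bnd_abs.
by move=> n cn H; apply: (Hb n.+1); apply: runs_cons Hs H.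
Qed.

Lemma good_sync (c : config S) (s : seq (msg M)) : goodA (abs c) (map (@nat_of_ord 3) s) ->
  exists c', runs (c0 S) (synct s) c' /\ (stable c -> c' = c).
Proof.
move=> /hasP [e He /andP [/eqP E1 /eqP E2]].
have := allP sync_ok e He; rewrite E1 E2 -code_synct.
case E: arun => [A'|] // Hst.
rewrite -abs_c0 in E; have [c' [Hr Ha]] := arun_runs E.
exists c'; split=> // /stable_abs Hs; apply: abs_inj; rewrite Ha.
by apply/eqP; apply: (implyP Hst).
Qed.

Lemma ST1_sub_ST0 x : ST (S:=S) 1 x -> ST (S:=S) 0 x.
Proof.
have G : forall tau (c : config S), runs (c0 S) tau c -> kbounded_fifo 1 tau ->
    goodA (abs c) (map (@nat_of_ord 3) (sends tau)).
  move=> tau c Hr Hk; have := good_runs Hr (p := [::]); rewrite cat0s; apply.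
    by rewrite abs_c0.
  by move=> n cn H; apply: kb_to Hk H.
case: x => [s|[s c]] /=.
  move=> [tau [[[c Hc] Hk] ->]].
  have [c' [Hr _]] := good_sync (G _ _ Hc Hk).
  exists (synct (sends tau)); rewrite sends_synct; split=> //; split.
    by exists c'.
  by exists (sends tau).
move=> [tau [[Ht Hk] [Hr [Hst ->]]]].
have [c' [Hr' Hc']] := good_sync (G _ _ Hr Hk).
rewrite (Hc' Hst) in Hr'; exists (synct (sends tau)); rewrite sends_synct; split=> //; split.
  by exists c.
by exists (sends tau).
Qed.

Definition tau2 : seq (action M) :=
  [:: @Send M P0; @Send M P0; @Send M P1; @Recv M P1; @Send M P2; @Recv M P2; @Recv M P0; @Recv M P0].

Definition codes2 := [:: 0; 0; 1; 4; 2; 5; 3; 3].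

Lemma codes2E : map code tau2 = codes2. Proof. by []. Qed.

Definition A2 : AC := mk [:: 3; 6; 2] [::] [::] [::].

Lemma arun2 : arun A0 codes2 = Some A2. Proof. by vm_compute. Qed.

Definition bnd2_b := all (fun n => match arun A0 (take n codes2) with
  | Some A => boundedA 2 A | None => true end) (iota 0 9).
Lemma bnd2_ok : bnd2_b. Proof. by vm_compute. Qed.

Lemma not_sync : ~ synchronizable S.
Proof.
move=> H.
have [c2 [Hr Ha]] : exists c2, runs (c0 S) tau2 c2 /\ abs c2 = A2.
  by apply: arun_runs; rewrite abs_c0 codes2E arun2.
have Hk : kbounded_fifo 2 tau2.
  apply: (kb_from Hr) => n cn Hn; apply/bnd_abs.
  have := runs_arun Hn; rewrite abs_c0 map_take codes2E.
  case: (ltnP n 9) => Hn9.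
    have := allP bnd2_ok n; rewrite mem_iota /= Hn9 => /(_ isT).
    by case: arun => // A Hb /Some_inj <-.
  rewrite take_oversize; last by apply: leq_trans Hn9.
  by rewrite arun2 => /Some_inj <-.
have Hst : stable c2 by apply/stable_abs; rewrite Ha.
have : STomega (S:=S) (inr (sends tau2, c2)).
  exists 2; exists tau2; split=> //; split=> //; by exists c2.
move/H => [tau' [[_ [s' Hs']] [Hr' [_ Hse]]]].
have Es : s' = sends tau2 by rewrite Hse Hs'; exact: (esym (sends_synct s')).
have := runs_arun Hr'; rewrite Hs'; change (map code _) with (map code (synct s')).
rewrite code_synct Es Ha abs_c0.
by vm_compute.
Qed.

Theorem theorem2p3 :
  exists (M : msgset) (S : system M),
    k_synchronizable S 1 /\ ~ synchronizable S.
Proof.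
exists M, S; split; last exact: not_sync.
by move=> x; split; [apply: ST0_sub_ST1 | apply: ST1_sub_ST0].
Qed.
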